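(* Let $\mathbb{K}$ be an infinite field of characteristic zero, let $G$ be a bipartite graph on $n\ge 5$ vertices and $w(G)$ its whiskered graph, on vertex set $[2n]$. Write $J(w(G))=(x_{i_{1,1}}\cdots x_{i_{1,r_1}},\dots,x_{i_{s,1}}\cdots x_{i_{s,r_s}})\subset\mathbb{K}[x_1,\dots,x_{2n}]$ and let $\Delta=\langle\{i_{1,1},\dots,i_{1,r_1}\},\dots,\{i_{s,1},\dots,i_{s,r_s}\}\rangle$. Then $A(\Delta)$ is a level monomial algebra that fails the strong Lefschetz property.
   Context: The whiskered graph $w(G)$ of a graph $G$ with vertices $v_1,\dots,v_n$ has vertex set $\{v_1,\dots,v_n,w_1,\dots,w_n\}$ and edge set $E(G)\cup\{v_iw_i:i\in[n]\}$. For a graph $H$, its facet ideal is $\mathcal{F}(H)=(x_ix_j:\{i,j\}\in E(H))$; if $\mathcal{F}(H)=\bigcap_k (x_{i_{k,1}},\dots,x_{i_{k,r_k}})$ is its primary decomposition, the cover ideal is $J(H)=(x_{i_{k,1}}\cdots x_{i_{k,r_k}}:k)$. $\langle F_1,\dots,F_s\rangle$ denotes the simplicial complex with facets $F_1,\dots,F_s$. For a simplicial complex $\Delta$ on $[N]$, with $S=\mathbb{K}[x_1,\dots,x_N]$, $\mathcal{N}(\Delta)=(x_\tau:\tau\subseteq[N],\tau\notin\Delta)$ and $A(\Delta)=S/(\mathcal{N}(\Delta)+(x_1^2,\dots,x_N^2))$. A graded artinian algebra $A$ with top nonzero degree $d$ is level if its socle $\{f: fA_1=0\}$ equals $A_d$.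 $A$ has the strong Lefschetz property if for a general linear form $L$ all maps $\times L^j:A_i\to A_{i+j}$ have full rank. *)

(* Defs.v *)
From HB Require Import structures.
From mathcomp Require Import all_boot all_order all_algebra.
From mathcomp Require Import mpoly.
Set Implicit Arguments.
Unset Strict Implicit.
Unset Printing Implicit Defensive.
Import GRing.Theory.
Local Open Scope ring_scope.

Definition simple_graph (n : nat) (e : rel 'I_n) : Prop :=
  (forall x y, e x y = e y x) /\ (forall x, e x x = false).

Definition bipartite (n : nat) (e : rel 'I_n) : Prop :=
  exists c : 'I_n -> bool, forall x y, e x y -> c x != c y.

(* whiskered graph w(G) on 'I_(n+n): v_i = lshift n i (index i),
   w_i = rshift n i (index n+i); edges E(G) together with v_i w_i. *)
Definition whisker (n : nat) (e : rel 'I_n) : rel 'I_(n + n) :=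
  fun u v =>
    match split u, split v with
    | inl a, inl b => e a b
    | inl a, inr b => a == b
    | inr a, inl b => a == b
    | inr _, inr _ => false
    end.

Section Ideals.
Variables (K : fieldType) (N : nat).
Local Notation S := {mpoly K[N]}.

Definition in_ideal (gens : S -> Prop) (p : S) : Prop :=
  exists s : seq (S * S),
    (forall q, q \in s -> gens q.2) /\ p = \sum_(q <- s) q.1 * q.2.

Definition ideal_sub (g1 g2 : S -> Prop) : Prop :=
  forall p, in_ideal g1 p -> in_ideal g2 p.

Definition edge_gens (H : rel 'I_N) (g : S) : Prop :=
  exists i j, H i j /\ g = 'X_i * 'X_j.

Definition var_gens (C : {set 'I_N}) (g : S) : Prop :=
  exists i, i \in C /\ g = 'X_i.

(* C indexes a component (x_i : i in C) of the (irredundant) primary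
   decomposition of F(H), i.e. a minimal prime of F(H):
   F(H) is contained in (x_i : i in C), and minimally so. *)
Definition cover_facet (H : rel 'I_N) (C : {set 'I_N}) : Prop :=
  ideal_sub (edge_gens H) (var_gens C) /\
  forall D : {set 'I_N}, D \proper C -> ~ ideal_sub (edge_gens H) (var_gens D).

(* the simplicial complex Delta = < supports of the generators of J(H) > *)
Definition cover_complex (H : rel 'I_N) (tau : {set 'I_N}) : Prop :=
  exists C, cover_facet H C /\ tau \subset C.

Definition A_gens (Delta : {set 'I_N} -> Prop) (g : S) : Prop :=
  (exists tau : {set 'I_N}, ~ Delta tau /\ g = \prod_(i in tau) 'X_i)
  \/ (exists i, g = 'X_i ^+ 2).

(* ---------- properties of the graded quotient A = S / I ----------
   Elements of A are represented by polynomials f (class f + I); the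
   degree-k component A_k is the image of the homogeneous polynomials of
   degree k.  [I] is the membership predicate of the ideal. *)

(* A is level: with d the top nonzero degree, socle(A) = A_d *)
Definition is_level (I : S -> Prop) : Prop :=
  exists d : nat,
    (exists h : S, h \is d.-homog /\ ~ I h) /\
    (forall (k : nat) (h : S), (d < k)%N -> h \is k.-homog -> I h) /\
    (forall f : S,
        (forall l : S, l \is 1.-homog -> I (f * l)) <->
        (exists h : S, h \is d.-homog /\ I (f - h))).

Definition mult_full_rank (I : S -> Prop) (L : S) (i j : nat) : Prop :=
  (forall h : S, h \is i.-homog -> I (L ^+ j * h) -> I h) \/
  (forall g : S, g \is (i + j).-homog ->
     exists h : S, h \is i.-homog /\ I (L ^+ j * h - g)).

(* strong Lefschetz property: for a general linear form L (i.e. for all L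
   whose coefficient vector lies outside the zero set of some nonzero
   polynomial P), all maps x L^j : A_i -> A_(i+j) have full rank. *)
Definition has_SLP (I : S -> Prop) : Prop :=
  exists P : S, P != 0 /\
    forall L : S, L \is 1.-homog ->
      P.@[fun k => mcoeff (mnm1 k) L] != 0 ->
      forall i j : nat, mult_full_rank I L i j.

End Ideals.

(* Main.v *)
Require Import Defs.
From HB Require Import structures.
From mathcomp Require Import all_boot all_order all_algebra.
From mathcomp Require Import mpoly.
Import GRing.Theory.
Local Open Scope ring_scope.
Set Implicit Arguments.
Unset Strict Implicit.
Unset Printing Implicit Defensive.

Section NV.
Variable K : fieldType.
Hypothesis K_infinite : forall s : seq K, exists x : K, x \notin s.

Lemma uniq_seq k : exists s : seq K, uniq s /\ size s = k.
Proof.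
elim: k => [|k [s [us ss]]]; first by exists [::].
have [x xs] := K_infinite s; exists (x :: s); by rewrite /= xs us ss.
Qed.

Lemma poly_vanish (r : {poly K}) : (forall x, r.[x] = 0) -> r = 0.
Proof.
move=> H; have [s [us ss]] := uniq_seq (size r).
apply: (roots_geq_poly_eq0 (rs := s)) => //; last by rewrite ss.
by apply/allP => x _; rewrite /root H.
Qed.

Lemma mpoly_morph_eq (M : nat) (S : comRingType) (f g : {mpoly K[M]} -> S) :
  f 0 = 0 -> g 0 = 0 ->
  {morph f : x y / x + y} -> {morph g : x y / x + y} ->
  {morph f : x y / x * y} -> {morph g : x y / x * y} ->
  f 1 = 1 -> g 1 = 1 ->
  (forall c, f c%:MP = g c%:MP) -> (forall i, f 'X_i = g 'X_i) ->
  forall p, f p = g p.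
Proof.
move=> f0 g0 fD gD fM gM f1 g1 fC fX p.
rewrite (mpolyE p) (big_morph f fD f0) (big_morph g gD g0).
apply: eq_bigr => m _; rewrite -mul_mpolyC fM gM fC; congr (_ * _).
rewrite mpolyXE_id (big_morph f fM f1) (big_morph g gM g1).
apply: eq_bigr => i _.
elim: (m i) => [|k IH]; first by rewrite !expr0 f1 g1.
by rewrite !exprS fM gM IH fX.
Qed.

Definition joinv N (v : 'I_N -> K) (x : K) (i : 'I_N.+1) : K :=
  match split (cast_ord (esym (addn1 N)) i) with
  | inl j => v j
  | inr _ => x
  end.

Lemma meval_muni N (p : {mpoly K[N.+1]}) v x :
  p.@[joinv v x] = (map_poly (meval v) (muni p)).[x].
Proof.
pose g := fun q : {mpoly K[N.+1]} => (map_poly (meval v) (muni q)).[x].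
change (meval (joinv v x) p = g p).
apply: mpoly_morph_eq.
- by rewrite meval0.
- by rewrite /g muni0 map_poly0 horner0.
- by move=> a b; rewrite mevalD.
- by move=> a b; rewrite /g muniD rmorphD /= hornerD.
- by move=> a b; rewrite mevalM.
- by move=> a b; rewrite /g muniM rmorphM /= hornerM.
- by rewrite meval1.
- by rewrite /g muni1 rmorph1 hornerC.
- by move=> c; rewrite /g mevalC muniC map_polyC hornerC /= mevalC.
move=> i; rewrite /g mevalXU /muni mmapX mmap1U /joinv.
case: split => j /=.
  by rewrite map_polyC hornerC /= mevalXU.
by rewrite map_polyX hornerX.
Qed.

Lemma muni_inj N (p : {mpoly K[N.+1]}) : muni p = 0 -> p = 0.
Proof.
move=> H.
pose g := fun q : {mpoly K[N.+1]} =>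
   (map_poly (@mwiden N K) (muni q)).['X_ord_max].
have E : forall q, g q = q.
  move=> q; apply: (@mpoly_morph_eq (N.+1) _ g id).
  - by rewrite /g muni0 map_poly0 horner0.
  - by [].
  - by move=> a b; rewrite /g muniD rmorphD /= hornerD.
  - by [].
  - by move=> a b; rewrite /g muniM rmorphM /= hornerM.
  - by [].
  - by rewrite /g muni1 rmorph1 hornerC.
  - by [].
  - by move=> c; rewrite /g muniC map_polyC hornerC /= mwidenC.
  move=> i; rewrite /g /muni mmapX mmap1U /=.
  case: splitP => j /= Hj.
    rewrite map_polyC hornerC /= mwidenX mnmwiden1; congr 'X__.
    by apply: val_inj; rewrite /= -Hj.
  rewrite map_polyX hornerX; congr 'X__; apply: val_inj => /=.
  by move: Hj; rewrite ord1 addn0 => ->.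
by rewrite -(E p) /g H map_poly0 horner0.
Qed.

Lemma mpoly_vanish N (p : {mpoly K[N]}) : (forall v, p.@[v] = 0) -> p = 0.
Proof.
elim: N p => [|N IH] p H.
  have m0 : forall m : 'X_{1..0}, m = 0%MM.
    by move=> m; apply/mnmP => -[].
  apply/mpolyP => m; rewrite mcoeff0 (m0 m).
  have := H (fun _ => 0); rewrite mevalE.
  rewrite (eq_bigr (fun m => p@_m)); last by move=> i _; rewrite big_ord0 mulr1.
  move=> Hs; case: (boolP (0%MM \in msupp p)) => Hm; last by move: Hm; rewrite mcoeff_msupp negbK => /eqP.
  move: Hs; rewrite (bigD1_seq _ Hm (msupp_uniq p)) /= big1_seq ?addr0 //.
  by move=> m' /andP [Hne _]; move: Hne; rewrite (m0 m') eqxx.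
apply: muni_inj; apply/polyP => j; rewrite coef0.
apply: IH => v.
have Hr : map_poly (meval v) (muni p) = 0.
  by apply: poly_vanish => x; rewrite -meval_muni H.
have := congr1 (fun r : {poly K} => r`_j) Hr.
by rewrite coef_map /= coef0.
Qed.

Lemma mpoly_nonvanish N (p : {mpoly K[N]}) :
  (forall v, p.@[v] != 0 -> False) -> p = 0.
Proof.
move=> H; apply: mpoly_vanish => v; apply/eqP.
by case: eqP => // /eqP /H.
Qed.
End NV.

Section IdealLemmas.
Variables (K : fieldType) (N : nat).
Implicit Types (g : {mpoly K[N]} -> Prop) (p q r : {mpoly K[N]}).

Lemma in_ideal0 g : in_ideal g 0.
Proof. by exists [::]; split => //; rewrite big_nil. Qed.

Lemma in_idealD g p q : in_ideal g p -> in_ideal g q -> in_ideal g (p + q).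
Proof.
move=> [s [Hs ->]] [t [Ht ->]]; exists (s ++ t); split; last by rewrite big_cat.
by move=> x; rewrite mem_cat => /orP [/Hs|/Ht].
Qed.

Lemma in_idealM g r p : in_ideal g p -> in_ideal g (r * p).
Proof.
move=> [s [Hs ->]]; exists [seq (r * x.1, x.2) | x <- s]; split.
  by move=> x /mapP [y /Hs Hy ->].
by rewrite big_map mulr_sumr; apply: eq_bigr => x _; rewrite mulrA.
Qed.

Lemma in_idealMr g r p : in_ideal g p -> in_ideal g (p * r).
Proof. by rewrite mulrC; apply: in_idealM. Qed.

Lemma in_idealG g p : g p -> in_ideal g p.
Proof.
by move=> Hp; exists [:: (1, p)]; split; [move=> x; rewrite inE => /eqP -> | rewrite big_seq1 mul1r].
Qed.

Lemma in_idealN g p : in_ideal g p -> in_ideal g (- p).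
Proof. by move=> H; rewrite -mulN1r; apply: in_idealM. Qed.

Lemma in_idealB g p q : in_ideal g p -> in_ideal g q -> in_ideal g (p - q).
Proof. by move=> Hp Hq; apply: in_idealD => //; apply: in_idealN. Qed.

Lemma in_idealZ g c p : in_ideal g p -> in_ideal g (c *: p).
Proof. by move=> H; rewrite -mul_mpolyC; apply: in_idealM. Qed.

Lemma in_ideal_sum g (I : Type) (s : seq I) (P : pred I) (F : I -> {mpoly K[N]}) :
  (forall i, P i -> in_ideal g (F i)) -> in_ideal g (\sum_(i <- s | P i) F i).
Proof.
move=> H; elim/big_rec: _ => [|i x Pi Hx]; first exact: in_ideal0.
by apply: in_idealD => //; apply: H.
Qed.

Lemma ideal_sub_gens g1 g2 :
  (forall p, g1 p -> in_ideal g2 p) -> ideal_sub g1 g2.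
Proof.
rewrite /ideal_sub => H p [s [Hs ->]].
rewrite big_seq; apply: in_ideal_sum => x xs.
apply: in_idealM; apply: H; exact: Hs.
Qed.

Definition Jp (B : 'X_{1..N} -> Prop) p := forall m, m \in msupp p -> B m.

Lemma Jp0 B : Jp B 0.
Proof. by move=> m; rewrite msupp0. Qed.

Lemma JpD B p q : Jp B p -> Jp B q -> Jp B (p + q).
Proof. by move=> Hp Hq m /msuppD_le; rewrite mem_cat => /orP [/Hp|/Hq]. Qed.

Lemma JpZ B c p : Jp B p -> Jp B (c *: p).
Proof. by move=> Hp m /msuppZ_le /Hp. Qed.

Lemma JpN B p : Jp B p -> Jp B (- p).
Proof. by move=> Hp m; rewrite (perm_mem (msuppN p)) => /Hp. Qed.

Lemma Jp_sum B (I : Type) (s : seq I) (P : pred I) (F : I -> {mpoly K[N]}) :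
  (forall i, P i -> Jp B (F i)) -> Jp B (\sum_(i <- s | P i) F i).
Proof.
move=> H; elim/big_rec: _ => [|i x Pi Hx]; first exact: Jp0.
by apply: JpD => //; apply: H.
Qed.

Lemma JpX (B : 'X_{1..N} -> Prop) m : B m -> Jp B 'X_[m].
Proof. by move=> Hm m'; rewrite msuppX inE => /eqP ->. Qed.

Lemma JpM (B1 B2 B3 : 'X_{1..N} -> Prop) p q :
  (forall m1 m2, B1 m1 -> B2 m2 -> B3 (m1 + m2)%MM) ->
  Jp B1 p -> Jp B2 q -> Jp B3 (p * q).
Proof.
move=> HB Hp Hq m /msuppM_le /allpairsP [[m1 m2] /= [H1 H2 ->]].
by apply: HB; [apply: Hp | apply: Hq].
Qed.

Lemma Jp_coef (B : 'X_{1..N} -> Prop) p m : Jp B p -> ~ B m -> p@_m = 0.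
Proof.
move=> Hp Hm; apply/eqP; rewrite mcoeff_eq0; apply/negP => /Hp; exact: Hm.
Qed.

End IdealLemmas.

Section Graph.
Variables (K : fieldType) (n : nat) (e : rel 'I_n).
Hypothesis G_simple : simple_graph e.

Local Notation N := (n + n).
Local Notation v := (@lshift n n).
Local Notation w := (@rshift n n).
Local Notation Delta := (@cover_complex K N (whisker e)).

Lemma splitL (i : 'I_n) : split (v i) = inl i.
Proof. exact: (unsplitK (inl i)). Qed.
Lemma splitR (i : 'I_n) : split (w i) = inr i.
Proof. exact: (unsplitK (inr i)). Qed.

Lemma ordLR (u : 'I_N) : (exists i, u = v i) \/ (exists i, u = w i).
Proof.
rewrite -(splitK u); case: split => i; [left|right]; by exists i.
Qed.

Definition covers (C : {set 'I_N}) :=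
  forall x y, whisker e x y -> x \in C \/ y \in C.

Lemma sub_covers (H : rel 'I_N) (D : {set 'I_N}) :
  ideal_sub (K:=K) (edge_gens H) (var_gens D) -> forall x y, H x y -> x \in D \/ y \in D.
Proof.
move=> Hs x y Hxy.
have Hin : in_ideal (K:=K) (var_gens D) ('X_x * 'X_y).
  by apply: Hs; apply: in_idealG; exists x, y.
case: (boolP (x \in D)) => Hx; first by left.
case: (boolP (y \in D)) => Hy; first by right.
exfalso; move: Hin => [s [Hs' Hsum]].
pose ev := fun k : 'I_N => if k \in D then (0 : K) else 1.
have := congr1 (meval ev) Hsum.
rewrite mevalM !mevalXU /ev (negbTE Hx) (negbTE Hy) mulr1.
rewrite (big_morph (meval ev) (mevalD ev) (meval0 ev)) big_seq big1.
  by move/eqP; rewrite oner_eq0.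
move=> q /Hs' [k [Hk ->]]; by rewrite mevalM mevalXU /ev Hk mulr0.
Qed.

Lemma covers_sub (H : rel 'I_N) (C : {set 'I_N}) :
  (forall x y, H x y -> x \in C \/ y \in C) ->
  ideal_sub (K:=K) (edge_gens H) (var_gens C).
Proof.
move=> Hc; apply: ideal_sub_gens => p [x [y [Hxy ->]]].
case: (Hc x y Hxy) => Hx.
  by apply: in_idealMr; apply: in_idealG; exists x.
by apply: in_idealM; apply: in_idealG; exists y.
Qed.

Lemma whiskerR_inv (i : 'I_n) y : whisker e (w i) y -> y = v i.
Proof.
by case: (ordLR y) => -[j ->]; rewrite /whisker splitR ?splitL ?splitR // => /eqP ->.
Qed.
Lemma whiskerR_inv' (i : 'I_n) x : whisker e x (w i) -> x = v i.
Proof.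
by case: (ordLR x) => -[j ->]; rewrite /whisker splitR ?splitL ?splitR // => /eqP ->.
Qed.
Lemma whisker_vw (i : 'I_n) : whisker e (v i) (w i).
Proof. by rewrite /whisker splitL splitR. Qed.

Lemma facet_one C : cover_facet K (whisker e) C -> forall i, v i \in C \/ w i \in C.
Proof.
move=> [Hs _] i; exact: (sub_covers Hs (whisker_vw i)).
Qed.

Lemma facet_notboth C : cover_facet K (whisker e) C -> forall i, v i \in C -> w i \notin C.
Proof.
move=> [Hs Hmin] i Hv; apply/negP => Hw.
apply: (Hmin (C :\ w i)).
  by rewrite properD1.
apply: covers_sub => x y Hxy.
have [Hx|Hy] := sub_covers Hs Hxy.
  case: (eqVneq x (w i)) => Exw.
    by right; move: Hxy; rewrite Exw => /whiskerR_inv ->; rewrite !inE Hv eq_lrshift.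
  by left; rewrite !inE Exw Hx.
case: (eqVneq y (w i)) => Eyw.
  by left; move: Hxy; rewrite Eyw => /whiskerR_inv' ->; rewrite !inE Hv eq_lrshift.
by right; rewrite !inE Eyw Hy.
Qed.

Definition idx (u : 'I_N) : 'I_n := match split u with inl i => i | inr i => i end.

Lemma facet_card C : cover_facet K (whisker e) C -> #|C| = n.
Proof.
move=> HC.
pose f := fun i => if v i \in C then v i else w i.
have fK : cancel f idx.
  by move=> i; rewrite /f /idx; case: ifP => _; rewrite ?splitL ?splitR.
have -> : C = f @: [set: 'I_n].
  apply/setP => u; apply/idP/imsetP.
    move=> Hu; exists (idx u) => //; move: Hu.
    case: (ordLR u) => -[i ->] Hu; rewrite /f /idx ?splitL ?splitR.
      by rewrite Hu.
    by case: ifP => // Hv; move: (facet_notboth HC Hv); rewrite Hu.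
  move=> [i _ ->]; rewrite /f; case: ifP => // /negbT Hv.
  by case: (facet_one HC i) => //; rewrite (negbTE Hv).
by rewrite card_imset ?cardsT ?card_ord //; apply: can_inj fK.
Qed.

Definition indep (T : {set 'I_n}) := forall x y, x \in T -> y \in T -> e x y = false.

Definition facetT (T : {set 'I_n}) : {set 'I_N} :=
  [set u | match split u with inl i => i \notin T | inr i => i \in T end].

Lemma facetT_facet T : indep T -> cover_facet K (whisker e) (facetT T).
Proof.
move=> HT; split.
  apply: covers_sub => x y; rewrite /whisker !inE.
  case: (split x) => i; case: (split y) => j //.
  - move=> Hij; case: (boolP (i \in T)) => Hi; last by left.
    case: (boolP (j \in T)) => Hj; last by right.
    by move: Hij; rewrite HT.
  - by move/eqP => <-; case: (boolP (i \in T)); [right | left].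
  - by move/eqP => <-; case: (boolP (i \in T)); [left | right].
move=> D /properP [HDC [u HuC HuD]] Hsub.
have Hc := sub_covers Hsub (whisker_vw (idx u)).
have Hv : v (idx u) \notin D.
  apply/negP => Hv; move/subsetP: (HDC) => /(_ _ Hv).
  move: Hv; rewrite !inE splitL.
  case: (ordLR u) HuC HuD => -[i ->]; rewrite !inE /idx ?splitL ?splitR.
  - by move=> _ /negP.
  - by move=> -> _ _.
have Hw : w (idx u) \notin D.
  apply/negP => Hw; move/subsetP: (HDC) => /(_ _ Hw).
  move: Hw; rewrite !inE splitR.
  case: (ordLR u) HuC HuD => -[i ->]; rewrite !inE /idx ?splitL ?splitR.
  - by move=> /negbTE -> _ _.
  - by move=> _ /negP.
by case: Hc => H; [move: Hv | move: Hw]; rewrite H.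
Qed.

End Graph.

Section Faces.
Variables (K : fieldType) (n : nat) (e : rel 'I_n).
Hypothesis G_simple : simple_graph e.

Local Notation N := (n + n).
Local Notation v := (@lshift n n).
Local Notation w := (@rshift n n).
Local Notation Delta := (@cover_complex K N (whisker e)).
Local Notation I := (in_ideal (A_gens Delta)).

Lemma face_sub (t t' : {set 'I_N}) : Delta t -> t' \subset t -> Delta t'.
Proof.
by move=> [C [HC Ht]] Ht'; exists C; split => //; apply: subset_trans Ht' Ht.
Qed.

Lemma face_card t : Delta t -> (#|t| <= n)%N.
Proof. by move=> [C [HC Ht]]; have := subset_leq_card Ht; rewrite (facet_card HC). Qed.

Lemma face_ext t : Delta t -> (#|t| < n)%N -> exists u, u \notin t /\ Delta (u |: t).
Proof.
move=> [C [HC Ht]] Hlt.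
have : ~~ (C \subset t).
  apply/negP => /subset_leq_card; rewrite (facet_card HC) leqNgt Hlt //.
case/subsetPn => u HuC Hut; exists u; split => //.
by exists C; split => //; rewrite subUset sub1set HuC Ht.
Qed.

Lemma face_pair i : ~ Delta [set v i; w i].
Proof.
move=> [C [HC Ht]]; move/subsetP: Ht => Ht.
have Hv : v i \in C by apply: Ht; rewrite !inE eqxx.
have Hw : w i \in C by apply: Ht; rewrite !inE eqxx orbT.
by move: (facet_notboth HC Hv); rewrite Hw.
Qed.

Lemma face_mk (U : {set 'I_n}) (t : {set 'I_N}) : indep e U ->
  (forall i, w i \in t -> i \in U) -> (forall i, v i \in t -> w i \notin t) ->
  Delta t.
Proof.
move=> HU HtU Hcl.
pose T := [set i | w i \in t].
have HT : indep e T.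
  by move=> x y; rewrite !inE => /HtU Hx /HtU Hy; apply: HU.
exists (facetT T); split; first exact: facetT_facet.
apply/subsetP => u Hu; rewrite !inE.
case: (ordLR u) Hu => -[i ->] Hu; rewrite ?splitL ?splitR inE //.
exact: Hcl.
Qed.

Definition supp (m : 'X_{1..N}) : {set 'I_N} := [set u | m u != 0%N].
Definition sqf (m : 'X_{1..N}) := forall u, (m u <= 1)%N.
Definition BadF (m : 'X_{1..N}) : Prop :=
  (exists u, 1 < m u)%N \/ ~ Delta (supp m).

Lemma BadF_up m1 m2 : BadF m2 -> BadF (m1 + m2)%MM.
Proof.
case=> [[u Hu]|Hd]; [left; exists u | right => Hd'].
  by rewrite mnmDE; apply: leq_trans Hu (leq_addl _ _).
apply: Hd; apply: face_sub Hd' _; apply/subsetP => u; rewrite !inE mnmDE.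
by rewrite addn_eq0 negb_and orbC => ->.
Qed.

Lemma mnm_sum1 (t : {set 'I_N}) u : (\sum_(i in t) U_(i))%MM u = (u \in t).
Proof.
rewrite mnm_sumE; case: (boolP (u \in t)) => Hu.
  rewrite (bigD1 u) //= mnm1E eqxx big1 ?addn0 // => i /andP [_ Hi].
  by rewrite mnm1E (negbTE Hi).
by rewrite big1 // => i Hi; rewrite mnm1E; case: eqP Hu => // <-; rewrite Hi.
Qed.

Lemma prodX_set (t : {set 'I_N}) :
  \prod_(i in t) 'X_i = 'X_[(\sum_(i in t) U_(i))%MM] :> {mpoly K[N]}.
Proof. by rewrite mprodXE. Qed.

Lemma supp_set (t : {set 'I_N}) : supp (\sum_(i in t) U_(i))%MM = t.
Proof. by apply/setP => u; rewrite inE mnm_sum1; case: (u \in t). Qed.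

Lemma I_Jp (p : {mpoly K[N]}) : I p -> Jp BadF p.
Proof.
move=> [s [Hs ->]]; rewrite big_seq; apply: Jp_sum => q /Hs Hq.
apply: (@JpM _ _ (fun _ => True) BadF BadF).
- by move=> m1 m2 _; apply: BadF_up.
- by [].
case: Hq => [[t [Ht ->]]|[i ->]].
  rewrite prodX_set; apply: JpX; right; by rewrite supp_set.
rewrite mpolyXn; apply: JpX; left; exists i.
by rewrite mulmnE mnm1E eqxx.
Qed.

Lemma I_coef (p : {mpoly K[N]}) m : I p -> sqf m -> Delta (supp m) -> p@_m = 0.
Proof.
move=> Hp Hs Hd; apply: (Jp_coef (I_Jp Hp)); case=> [[u Hu]|//].
by move: (Hs u); rewrite leqNgt Hu.
Qed.

Lemma BadIn m : BadF m -> I ('X_[m] : {mpoly K[N]}).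
Proof.
move=> Hb; case: (boolP [exists u, 1 < m u]%N).
  case/existsP => u Hu; rewrite mpolyXE_id (bigD1 u) //=.
  rewrite -(subnK Hu) exprD.
  apply: in_idealMr; apply: in_idealM; apply: in_idealG; right; by exists u.
move=> Hn.
have Hs : sqf m by move=> u; rewrite leqNgt; apply/negP => H; move/negP: Hn; apply; apply/existsP; exists u.
case: Hb => [[u Hu]|Hd]; first by move: (Hs u); rewrite leqNgt Hu.
apply: in_idealG; left; exists (supp m); split => //.
rewrite mpolyXE_id (big_mkcond (fun i => i \in supp m)) /=.
apply: eq_bigr => i _; rewrite inE.
by have := Hs i; case: (m i) => [|[|//]] _ /=; rewrite ?expr0 ?expr1.
Qed.

Lemma bad_poly (p : {mpoly K[N]}) : (forall m, m \in msupp p -> BadF m) -> I p.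
Proof.
move=> H; rewrite (mpolyE p) big_seq; apply: in_ideal_sum => m Hm.
by apply: in_idealZ; apply: BadIn; apply: H.
Qed.

End Faces.

Section Level.
Variables (K : fieldType) (n : nat) (e : rel 'I_n).
Hypothesis G_simple : simple_graph e.

Local Notation N := (n + n).
Local Notation v := (@lshift n n).
Local Notation w := (@rshift n n).
Local Notation Delta := (@cover_complex K N (whisker e)).
Local Notation I := (in_ideal (A_gens Delta)).

Lemma card_supp (m : 'X_{1..N}) : sqf m -> #|supp m| = mdeg m.
Proof.
move=> Hs; rewrite mdegE -sum1_card big_mkcond /=; apply: eq_bigr => u _.
by rewrite inE; have := Hs u; case: (m u) => [|[|//]].
Qed.

Definition tv : {set 'I_N} := [set v i | i in [set: 'I_n]].

Lemma wi_tv i : w i \in tv = false.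
Proof.
apply/negP => /imsetP [j _ /eqP]; by rewrite eq_rlshift.
Qed.

Lemma face_tv : Delta tv.
Proof.
apply: (@face_mk K n e set0) => [x y|i|i _]; rewrite ?wi_tv //.
by rewrite inE.
Qed.

Lemma card_tv : #|tv| = n.
Proof. by rewrite card_imset ?cardsT ?card_ord //; apply: lshift_inj. Qed.

Definition mv : 'X_{1..N} := (\sum_(i in tv) U_(i))%MM.

Lemma mdeg_mv : mdeg mv = n.
Proof.
rewrite mdegE (eq_bigr (fun u => nat_of_bool (u \in tv))); last by move=> u _; rewrite mnm_sum1.
by rewrite -big_mkcond /= sum1_card card_tv.
Qed.

Lemma sqf_sum1 (t : {set 'I_N}) : sqf (\sum_(i in t) U_(i))%MM.
Proof. by move=> u; rewrite mnm_sum1; case: (u \in t). Qed.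

Lemma Xmv_notin : ~ I ('X_[mv] : {mpoly K[N]}).
Proof.
move=> H; have := I_coef H (sqf_sum1 tv); rewrite /mv supp_set.
by move=> /(_ face_tv) /eqP; rewrite mcoeffX eqxx oner_eq0.
Qed.

Lemma high_deg (k : nat) (h : {mpoly K[N]}) : (n < k)%N -> h \is k.-homog -> I h.
Proof.
move=> Hk /dhomogP Hh; apply: bad_poly => m Hm.
case: (boolP [exists u, 1 < m u]%N) => [/existsP [u Hu]|Hn]; first by left; exists u.
right => Hd.
have Hs : sqf m by move=> u; rewrite leqNgt; apply/negP => H; move/negP: Hn; apply; apply/existsP; exists u.
have := face_card Hd; rewrite card_supp // (Hh m Hm) leqNgt Hk //.
Qed.

Lemma level_part : @is_level K (n + n) (in_ideal (A_gens (@cover_complex K (n + n) (whisker e)))).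
Proof.
exists n; split; first by exists 'X_[mv]; split; [rewrite dhomogX /= mdeg_mv | exact: Xmv_notin].
split; first by move=> k h Hk Hh; apply: (high_deg Hk Hh).
move=> f; split; last first.
  move=> [h [Hh Hfh]] l Hl.
  have -> : f * l = (f - h) * l + h * l by rewrite mulrBl subrK.
  apply: in_idealD; first exact: in_idealMr.
  apply: (@high_deg (n + 1)); first by rewrite addn1.
  exact: dhomogM.
move=> Hf.
pose h := \sum_(m <- msupp f | mdeg m == n) f@_m *: ('X_[m] : {mpoly K[N]}).
exists h; split.
  apply: rpred_sum => m /eqP Hm; apply: rpredZ; by rewrite dhomogX /= Hm.
have -> : f - h = \sum_(m <- msupp f | mdeg m != n) f@_m *: 'X_[m].
  rewrite {1}(mpolyE f) (bigID (fun m => mdeg m == n)) /= addrC -/h addrK //.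
rewrite big_seq_cond; apply: in_ideal_sum => m /andP [Hm Hdeg].
apply: in_idealZ; apply: BadIn.
case: (boolP [exists u, 1 < m u]%N) => [/existsP [u Hu]|Hn]; first by left; exists u.
right => Hd.
have Hs : sqf m by move=> u; rewrite leqNgt; apply/negP => H; move/negP: Hn; apply; apply/existsP; exists u.
have Hc := face_card Hd; rewrite card_supp // in Hc.
have Hlt : (#|supp m| < n)%N by rewrite card_supp // ltn_neqAle Hdeg Hc.
have [u [Hu Hdu]] := face_ext Hd Hlt.
have Hmu : (U_(u) + m)%MM u = 1%N.
  by rewrite mnmDE mnm1E eqxx; move: Hu; rewrite inE negbK => /eqP ->.
have HI : I (f * 'X_u) by apply: Hf; rewrite dhomogX /= mdeg1.
have Hs' : sqf (U_(u) + m)%MM.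
  move=> x; rewrite mnmDE mnm1E; case: eqP => [<-|_]; last exact: Hs.
  by move: Hu; rewrite inE negbK => /eqP ->.
have Hsupp : supp (U_(u) + m)%MM = u |: supp m.
  apply/setP => x; rewrite !inE mnmDE mnm1E.
  case: (eqVneq u x) => [<-|Hux] /=; first by rewrite ?eqxx.
  by rewrite ?add0n.
have := I_coef HI Hs'; rewrite Hsupp mcoeffMX => /(_ Hdu) /eqP.
by rewrite mcoeff_eq0 Hm.
Qed.

End Level.

Lemma pick_pair (n : nat) (e : rel 'I_n) : simple_graph e -> bipartite e -> (3 <= n)%N ->
  exists a b : 'I_n, a != b /\ e a b = false /\ e b a = false.
Proof.
move=> [Hsym _] [col Hcol] Hn.
have Hne : forall x y : 'I_n, col x = col y -> e x y = false.
  by move=> x y Hxy; apply/negP => /Hcol; rewrite Hxy eqxx.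
pose i0 : 'I_n := Ordinal (leq_trans (isT : 0 < 3)%N Hn).
pose i1 : 'I_n := Ordinal (leq_trans (isT : 1 < 3)%N Hn).
pose i2 : 'I_n := Ordinal (leq_trans (isT : 2 < 3)%N Hn).
have n01 : i0 != i1 by [].
have n02 : i0 != i2 by [].
have n12 : i1 != i2 by [].
case E0 : (col i0); case E1 : (col i1); case E2 : (col i2).
all: first [ exists i0, i1; split => //; rewrite Hsym; split; apply: Hne; by rewrite E0 E1
           | exists i0, i2; split => //; rewrite Hsym; split; apply: Hne; by rewrite E0 E2
           | exists i1, i2; split => //; rewrite Hsym; split; apply: Hne; by rewrite E1 E2 ].
Qed.

Section SLP.
Variables (K : fieldType) (n : nat) (e : rel 'I_n).
Hypothesis G_simple : simple_graph e.
Hypothesis n_ge3 : (3 <= n)%N.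
Variables (a b : 'I_n).
Hypothesis ab : a != b.
Hypothesis eab : e a b = false.
Hypothesis eba : e b a = false.
Variable c : 'I_(n + n) -> K.
Hypothesis c_nz : forall u, c u != 0.

Local Notation N := (n + n).
Local Notation v := (@lshift n n).
Local Notation w := (@rshift n n).
Local Notation Delta := (@cover_complex K N (whisker e)).
Local Notation I := (in_ideal (A_gens Delta)).

Definition LL : {mpoly K[N]} := \sum_(u < N) c u *: 'X_u.

Lemma LL_homog : LL \is 1.-homog.
Proof. by apply: rpred_sum => u _; apply: rpredZ; rewrite dhomogX /= mdeg1. Qed.

Lemma LL_coef k : mcoeff U_(k) LL = c k.
Proof.
rewrite /LL raddf_sum /= (bigD1 k) //= mcoeffZ mcoeffXU eqxx mulr1 big1 ?addr0 //.
by move=> u Hu; rewrite mcoeffZ mcoeffXU (negbTE Hu) mulr0.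
Qed.

Definition ell (i : 'I_n) : {mpoly K[N]} := c (v i) *: 'X_(v i) + c (w i) *: 'X_(w i).

Lemma LL_ell : LL = \sum_(i < n) ell i.
Proof. by rewrite /LL big_split_ord /= -big_split. Qed.

Lemma prod_pair (x y : 'I_N) : x != y ->
  \prod_(u in [set x; y]) 'X_u = 'X_x * 'X_y :> {mpoly K[N]}.
Proof.
by move=> Hxy; rewrite big_setU1 ?inE //= big_set1.
Qed.

Lemma vw_neq i j : v i != w j.
Proof. by rewrite eq_lrshift. Qed.

Lemma ell2 i : I (ell i ^+ 2).
Proof.
rewrite /ell sqrrD; apply: in_idealD; first apply: in_idealD.
- rewrite exprZn; apply: in_idealZ; apply: in_idealG; right; by exists (v i).
- rewrite mulr2n -scalerAl -scalerAr; apply: in_idealD; apply: in_idealZ; apply: in_idealZ;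
  rewrite -prod_pair ?vw_neq //; apply: in_idealG; left; exists [set v i; w i]; split => //;
  exact: face_pair.
- rewrite exprZn; apply: in_idealZ; apply: in_idealG; right; by exists (w i).
Qed.

Lemma in_idealMn (p : {mpoly K[N]}) k : I p -> I (p *+ k).
Proof. by move=> H; rewrite -mulr_natl; apply: in_idealM. Qed.

Lemma nil_step (l y : {mpoly K[N]}) k : I (l ^+ 2) -> I (y ^+ k.+1) -> I ((y + l) ^+ k.+2).
Proof.
move=> Hl Hy; rewrite exprDn; apply: in_ideal_sum => -[[|[|i]] Hi] _; apply: in_idealMn.
- by rewrite subn0 expr0 mulr1 exprS; apply: in_idealM.
- by rewrite subSS subn0 expr1; apply: in_idealMr.
- have -> : l ^+ i.+2 = l ^+ i * l ^+ 2 by rewrite -exprD addn2.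
  by rewrite mulrA; apply: in_idealM.
Qed.

Lemma sum_nil k (A : {set 'I_n}) : #|A| = k -> I ((\sum_(i in A) ell i) ^+ k.+1).
Proof.
elim: k A => [|k IH] A HA.
  have -> : A = set0 by apply/eqP; rewrite -cards_eq0 HA.
  by rewrite big_set0 expr1; apply: in_ideal0.
have : (0 < #|A|)%N by rewrite HA.
case/card_gt0P => x Hx.
rewrite (big_setD1 x Hx) /= addrC; apply: nil_step; first exact: ell2.
by apply: IH; move: HA; rewrite (cardsD1 x A) Hx => -[].
Qed.

Definition Ab : {set 'I_n} := ~: [set a; b].

Lemma card_Ab : #|Ab| = (n - 2)%N.
Proof. by rewrite cardsCs setCK cards2 ab card_ord. Qed.

Lemma LL_split : LL = (\sum_(i in Ab) ell i) + (ell a + ell b).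
Proof.
rewrite LL_ell (bigD1 a) //= (bigD1 b) /=; last by rewrite eq_sym.
rewrite addrA addrC; congr (_ + _).
by apply: eq_bigl => i; rewrite !inE negb_or andbC.
Qed.

Definition hker : {mpoly K[N]} := ell a - ell b.

Lemma kernel_in : I (LL ^+ (n - 1) * hker).
Proof.
rewrite LL_split exprDn mulr_suml; apply: in_ideal_sum => -[[|j] Hj] _.
  rewrite subn0 expr0 mulr1 mulrnAl; apply: in_idealMn; apply: in_idealMr.
  have -> : (n - 1 = (n - 2).+1)%N by rewrite -subSn // ?subSS //; apply: leq_trans n_ge3.
  exact: sum_nil card_Ab.
rewrite mulrnAl; apply: in_idealMn; rewrite exprSr -!mulrA; apply: in_idealM; apply: in_idealM.
rewrite /hker mulrC -subr_sqr; apply: in_idealB; exact: ell2.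
Qed.

Lemma hker_homog : hker \is 1.-homog.
Proof. by rewrite /hker /ell; apply: rpredB; apply: rpredD; apply: rpredZ; rewrite dhomogX /= mdeg1. Qed.

Lemma hker_notin : ~ I hker.
Proof.
move=> H.
have Hs : sqf (U_(v a))%MM by move=> u; rewrite mnm1E; case: eqP.
have Hsupp : supp (U_(v a))%MM = [set v a].
  apply/setP => u; rewrite !inE mnm1E; case: (v a =P u) => [<-|H'] /=; first by rewrite eqxx.
  by apply/esym/eqP => E; apply: H'; rewrite E.
have Hd : Delta (supp (U_(v a))%MM).
  rewrite Hsupp; apply: (face_sub (face_tv K e)); rewrite sub1set; apply/imsetP; by exists a.
have := I_coef H Hs Hd; rewrite /hker /ell !mcoeffB !mcoeffD !mcoeffZ !mcoeffXU.
rewrite eqxx eq_rlshift (inj_eq (@lshift_inj _ _)) eq_sym (negbTE ab) eq_rlshift.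
by rewrite !mulr0 mulr1 !addr0 subr0 => /eqP; rewrite (negbTE (c_nz _)).
Qed.

End SLP.

Section Coker.
Variables (K : fieldType) (n : nat) (e : rel 'I_n).
Hypothesis G_simple : simple_graph e.
Hypothesis n_ge3 : (3 <= n)%N.
Variables (a b : 'I_n).
Hypothesis ab : a != b.
Hypothesis eab : e a b = false.
Hypothesis eba : e b a = false.
Variable c : 'I_(n + n) -> K.
Hypothesis c_nz : forall u, c u != 0.

Local Notation N := (n + n).
Local Notation v := (@lshift n n).
Local Notation w := (@rshift n n).
Local Notation Delta := (@cover_complex K N (whisker e)).
Local Notation I := (in_ideal (A_gens Delta)).

Definition UU : {set 'I_n} := [set a; b].

Lemma UU_indep : indep e UU.
Proof.
have [_ Hirr] := G_simple.
by move=> x y; rewrite !inE => /orP [] /eqP -> /orP [] /eqP ->.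
Qed.

Definition beta (i : 'I_n) : K := - c (v i) / c (w i).

Definition hphi (u : 'I_N) : {mpoly K[n]} :=
  match split u with
  | inl i => 'X_i
  | inr i => if i \in UU then beta i *: 'X_i else 0
  end.

Local Notation phi := (mmap (@mpolyC n K) hphi).

Lemma phiX u : phi 'X_u = hphi u.
Proof. by rewrite mmapX mmap1U. Qed.

Lemma phiM p q : phi (p * q) = phi p * phi q.
Proof. exact: rmorphM. Qed.

Lemma phiB p q : phi (p - q) = phi p - phi q.
Proof. exact: rmorphB. Qed.

Definition BW (W : {set 'I_n}) (k : nat) (m : 'X_{1..n}) : Prop :=
  (exists i, 1 < m i)%N \/ (k <= \sum_(i in W) m i)%N.

Lemma BW_add W k1 k2 m1 m2 : BW W k1 m1 -> BW W k2 m2 -> BW W (k1 + k2) (m1 + m2)%MM.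
Proof.
case=> [[i Hi]|H1]; first by move=> _; left; exists i; rewrite mnmDE; apply: leq_trans Hi (leq_addr _ _).
case=> [[i Hi]|H2]; first by left; exists i; rewrite mnmDE; apply: leq_trans Hi (leq_addl _ _).
right; rewrite (eq_bigr (fun i => m1 i + m2 i)%N); last by move=> i _; rewrite mnmDE.
by rewrite big_split /= leq_add.
Qed.

Lemma BW_up W k m1 m2 : BW W k m2 -> BW W k (m1 + m2)%MM.
Proof. by move=> H; rewrite -[k]add0n; apply: BW_add => //; right. Qed.

Lemma JpX2 (W : {set 'I_n}) k i : Jp (BW W k) ('X_i ^+ 2 : {mpoly K[n]}).
Proof. by rewrite mpolyXn; apply: JpX; left; exists i; rewrite mulmnE mnm1E eqxx. Qed.

Lemma phi_gen g : A_gens Delta g -> Jp (BW set0 1) (phi g).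
Proof.
case=> [[t [Ht ->]]|[u ->]]; last first.
  rewrite rmorphXn /= phiX /hphi; case: (ordLR u) => -[i ->]; rewrite ?splitL ?splitR.
    exact: JpX2.
  case: ifP => _; last by rewrite expr2 mul0r; apply: Jp0.
  by rewrite exprZn; apply: JpZ; apply: JpX2.
rewrite rmorph_prod /=.
case: (boolP [exists i, (w i \in t) && (i \notin UU)]).
  case/existsP => i /andP [Hi HU]; rewrite (bigD1 (w i)) //= phiX /hphi splitR (negbTE HU) mul0r.
  exact: Jp0.
move=> HnU.
have HwU : forall i, w i \in t -> i \in UU.
  move=> i Hi; apply/negPn/negP => HU; move/negP: HnU; apply; apply/existsP; exists i; by rewrite Hi HU.
case: (boolP [exists i, (v i \in t) && (w i \in t)]).
  case/existsP => i /andP [Hv Hw]; rewrite (bigD1 (v i)) //= (bigD1 (w i)) /=; last first.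
    by rewrite Hw eq_sym; apply: vw_neq.
  rewrite !phiX /hphi splitL splitR (HwU i Hw) mulrA.
  apply: (@JpM _ _ (BW set0 1) (fun _ => True) (BW set0 1)) => //.
    by move=> m1 m2 H _; rewrite addmC; apply: BW_up.
  by rewrite -scalerAr -expr2; apply: JpZ; apply: JpX2.
move=> Hncl; exfalso; apply: Ht; apply: (@face_mk K n e UU t UU_indep HwU) => i Hv; apply/negP => Hw.
by move/negP: Hncl; apply; apply/existsP; exists i; rewrite Hv Hw.
Qed.

Lemma phi_I p : I p -> Jp (BW set0 1) (phi p).
Proof.
move=> [s [Hs ->]]; rewrite raddf_sum /= big_seq; apply: Jp_sum => q /Hs Hq.
rewrite phiM; apply: (@JpM _ _ (fun _ => True) (BW set0 1) (BW set0 1)) => //.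
- by move=> m1 m2 _; apply: BW_up.
exact: phi_gen.
Qed.

Definition m1 : 'X_{1..n} := (\sum_(i < n) U_(i))%MM.

Lemma m1E i : m1 i = 1%N.
Proof.
rewrite /m1 mnm_sumE (bigD1 i) //= mnm1E eqxx big1 // => j Hj.
by rewrite mnm1E (negbTE Hj).
Qed.

Lemma phi_I_coef p : I p -> (phi p)@_m1 = 0.
Proof.
move=> H; apply: (Jp_coef (phi_I H)); case=> [[i]|]; first by rewrite m1E.
by rewrite big_set0.
Qed.

Lemma phi_LL : Jp (BW (~: UU) 1) (phi (LL c)).
Proof.
rewrite LL_ell raddf_sum /=; apply: Jp_sum => i _.
rewrite /ell rmorphD /= !mmapZ !mul_mpolyC !phiX /hphi splitL splitR.
case: ifP => HU.
  rewrite scalerA -scalerDl /beta mulrCA divff ?c_nz // mulr1 subrr scale0r; exact: Jp0.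
rewrite scaler0 addr0; apply: JpZ; apply: JpX; right.
rewrite (bigD1 i); last by rewrite in_setC HU.
by rewrite mnm1E eqxx.
Qed.

Lemma phi_LL_pow k : Jp (BW (~: UU) k) (phi (LL c) ^+ k).
Proof.
elim: k => [|k IH]; first by rewrite expr0; move=> m _; right.
rewrite exprS -add1n; exact: (JpM (@BW_add (~: UU) 1 k) phi_LL IH).
Qed.

Lemma card_UUc : #|~: UU| = (n - 2)%N.
Proof. by rewrite cardsCs setCK cards2 ab card_ord. Qed.

Lemma phi_image h : (phi (LL c ^+ (n - 1) * h))@_m1 = 0.
Proof.
rewrite phiM rmorphXn /=.
have HJ : Jp (BW (~: UU) (n - 1)) (phi (LL c) ^+ (n - 1) * phi h).
  have H0 : Jp (BW (~: UU) 0) (phi h) by move=> m _; right.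
  by have := JpM (@BW_add (~: UU) (n - 1)%N 0) (@phi_LL_pow (n - 1)%N) H0; rewrite addn0.
apply: (Jp_coef HJ); case=> [[i]|]; first by rewrite m1E.
rewrite (eq_bigr (fun _ => 1%N)); last by move=> i _; rewrite m1E.
rewrite sum1_card card_UUc; apply/negP; rewrite -ltnNge.
by rewrite -subSn ?ltnS ?leq_sub2l //; apply: leq_trans n_ge3.
Qed.

Lemma phi_mv : phi ('X_[mv n]) = 'X_[m1].
Proof.
rewrite /mv -prodX_set rmorph_prod /= /tv big_imset /=; last by move=> x y _ _; apply: lshift_inj.
rewrite /m1 -mprodXE; apply: eq_big => [i|i _]; first by rewrite inE.
by rewrite phiX /hphi splitL.
Qed.

Lemma coker h : ~ I (LL c ^+ (n - 1) * h - 'X_[mv n]).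
Proof.
move=> /phi_I_coef; rewrite phiB mcoeffB phi_image phi_mv mcoeffX eqxx sub0r.
by move/eqP; rewrite oppr_eq0 oner_eq0.
Qed.

End Coker.

Unset Implicit Arguments.
Set Strict Implicit.
Theorem corollary5p13 (K : fieldType) (n : nat) (e : rel 'I_n)
  (K_infinite : forall s : seq K, exists x : K, x \notin s)
  (K_char0 : [pchar K] =i pred0)
  (G_simple : simple_graph e) (G_bip : bipartite e) (n_ge5 : (5 <= n)%N) :
  @is_level K (n + n) (in_ideal (A_gens (@cover_complex K (n + n) (whisker e))))
  /\ ~ @has_SLP K (n + n) (in_ideal (A_gens (@cover_complex K (n + n) (whisker e)))).
Proof.
split; first exact: level_part.
move=> [P [HP HS]].
have n3 : (2 < n)%N by apply: leq_trans n_ge5.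
have [a [b [ab [eab eba]]]] := pick_pair G_simple G_bip n3.
pose Q : {mpoly K[n + n]} := P * \prod_(u < n + n) 'X_u.
have HX : forall u : 'I_(n + n), ('X_u : {mpoly K[n + n]}) != 0.
  move=> u; apply/eqP => /(congr1 (mcoeff U_(u))); rewrite mcoeffX eqxx mcoeff0.
  by move/eqP; rewrite oner_eq0.
have HQ : Q != 0 by rewrite mulf_neq0 //; apply/prodf_neq0 => u _; apply: HX.
apply: (negP HQ); apply/eqP; apply: (mpoly_nonvanish K_infinite) => cc Hcc.
move: Hcc; rewrite /Q mevalM (big_morph _ (mevalM cc) (meval1 cc)) mulf_eq0 negb_or.
case/andP => HPc /prodf_neq0 Hc.
have Hc' : forall u, cc u != 0 by move=> u; move: (Hc u isT); rewrite mevalXU.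
have HPL : P.@[fun k => mcoeff U_(k) (LL cc)] != 0.
  by rewrite (meval_eq _ (@LL_coef K n cc)).
have := HS (LL cc) (LL_homog cc) HPL 1%N (n - 1)%N.
case=> [Hinj|Hsurj].
  apply: (hker_notin ab Hc'); apply: Hinj; first exact: hker_homog.
  exact: kernel_in.
have Hh : ('X_[mv n] : {mpoly K[n + n]}) \is (1 + (n - 1))%N.-homog.
  by rewrite dhomogX /= mdeg_mv addnC subnK //; apply: leq_trans n_ge5.
have [h [_ Hh2]] := Hsurj _ Hh.
exact: (coker G_simple n3 ab eab eba Hc' Hh2).
Qed.
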